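(* Let $\epsilon>0$, $\alpha\in(0,1)$, $0<\theta_0<\theta_1<1$ and $n\geq 1$ be given. Observe $X\sim \mathrm{Binom}(n,\theta)$, where $\theta$ is unknown. Let $N_0\sim \mathrm{Tulap}(0,b=e^{-\epsilon},0)$, and define the decision rule $\phi^*:\mathbb{Z}\to[0,1]$ by $\phi^*_x=F_{N_0}(x-m)$, where $m\in\mathbb{R}$ is chosen such that $\mathbb{E}_{\theta_0}\phi^*_X=\alpha$. Then $\phi^*$ is the uniformly most powerful level-$\alpha$ test of $H_0:\theta=\theta_0$ versus $H_1:\theta=\theta_1$ among $\mathscr D^n_{\epsilon,0}$.
   Context: Nearest integer function: for $t\in\mathbb{R}$, $[t]$ is the integer nearest to $t$, where for $z\in\mathbb{Z}$, $[z+1/2]$ is defined to be the nearest even integer. Tulap distribution: for $m\in\mathbb{R}$, $b\in(0,1)$, $q\in[0,1)$, $N_0\sim\mathrm{Tulap}(m,b,0)$ has cdf $F_{N_0}(x)=\frac{b^{-[x-m]}}{1+b}\big(b+(x-m-[x-m]+\tfrac12)(1-b)\big)$ for $x\leq [m]$ and $F_{N_0}(x)=1-\frac{b^{[x-m]}}{1+b}\big(b+([x-m]-(x-m)+\tfrac12)(1-b)\big)$ for $x>[m]$; and $N\sim \mathrm{Tulap}(m,b,q)$ has cdf $F_N(x)=\frac{F_{N_0}(x)-q/2}{1-q}\,I\{q/2\leq F_{N_0}(x)\leq 1-q/2\}+I\{F_{N_0}(x)>1-q/2\}$. A (randomized) test is a function $\phi:\{0,1,\dots,n\}\to[0,1]$,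 $\phi_x$ being the probability of rejecting $H_0$ when $X=x$; its power at $\theta$ is $\mathbb{E}_\theta\phi_X$. For $\epsilon>0,\delta\ge 0$, $\mathscr D^n_{\epsilon,\delta}$ is the set of tests $\phi$ such that for all $x\in\{0,\dots,n-1\}$: $\phi_x\le e^\epsilon\phi_{x+1}+\delta$, $\phi_{x+1}\le e^\epsilon\phi_x+\delta$, $1-\phi_x\le e^\epsilon(1-\phi_{x+1})+\delta$, $1-\phi_{x+1}\le e^\epsilon(1-\phi_x)+\delta$ (these are the tests satisfying $(\epsilon,\delta)$-differential privacy as functions of the count). A test $\phi^*\in\Phi$ is uniformly most powerful (UMP) at level $\alpha$ among $\Phi$ if $\sup_{\theta\in\Theta_0}\mathbb{E}_\theta\phi^*\le\alpha$ and for every $\phi\in\Phi$ with $\sup_{\theta\in\Theta_0}\mathbb{E}_\theta\phi\le\alpha$, $\mathbb{E}_\theta\phi^*\ge\mathbb{E}_\theta\phi$ for all $\theta$ in the alternative. *)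

(* Defs.v *)
From Stdlib Require Import Reals ZArith Lra.
Open Scope R_scope.

(* floor of t : up t is the unique integer with t < up t <= t + 1 *)
Definition floorZ (t : R) : Z := (up t - 1)%Z.

Definition round_near (t : R) : Z :=
  let f := floorZ t in
  let d := t - IZR f in
  if Rlt_dec d (1/2) then f
  else if Rlt_dec (1/2) d then (f + 1)%Z
  else if Z.even f then f else (f + 1)%Z.

Definition tulap_cdf (m b x : R) : R :=
  let k := round_near (x - m) in
  if Rle_dec x (IZR (round_near m)) then
    powerRZ b (- k) / (1 + b) * (b + (x - m - IZR k + 1/2) * (1 - b))
  else
    1 - powerRZ b k / (1 + b) * (b + (IZR k - (x - m) + 1/2) * (1 - b)).

Definition binom_expect (n : nat) (theta : R) (phi : nat -> R) : R :=
  sum_f_R0 (fun x => C n x * theta ^ x * (1 - theta) ^ (n - x) * phi x) n.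

Definition is_test (n : nat) (phi : nat -> R) : Prop :=
  forall x, (x <= n)%nat -> 0 <= phi x <= 1.

Definition DP_tests (n : nat) (eps delta : R) (phi : nat -> R) : Prop :=
  is_test n phi /\
  forall x, (x < n)%nat ->
    phi x <= exp eps * phi (S x) + delta /\
    phi (S x) <= exp eps * phi x + delta /\
    1 - phi x <= exp eps * (1 - phi (S x)) + delta /\
    1 - phi (S x) <= exp eps * (1 - phi x) + delta.

Definition UMP_simple (n : nat) (Phi : (nat -> R) -> Prop) (alpha theta0 theta1 : R)
  (phistar : nat -> R) : Prop :=
  Phi phistar /\
  binom_expect n theta0 phistar <= alpha /\
  forall phi, Phi phi -> binom_expect n theta0 phi <= alpha ->
    binom_expect n theta1 phi <= binom_expect n theta1 phistar.

Definition phi_star (eps m : R) (x : nat) : R :=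
  tulap_cdf 0 (exp (- eps)) (INR x - m).

(* Main.v *)
Require Import Defs.
From Stdlib Require Import Reals.
From Stdlib Require Import Lra Lia ZArith.
Open Scope R_scope.

Lemma round_spec x : IZR (round_near x) - 1/2 <= x <= IZR (round_near x) + 1/2.
Proof.
  unfold round_near, floorZ.
  destruct (archimed x) as [H1 H2].
  assert (Hf : IZR (up x - 1) = IZR (up x) - 1) by (rewrite minus_IZR; reflexivity).
  destruct (Rlt_dec _ _); [rewrite Hf; lra|].
  destruct (Rlt_dec _ _); [rewrite plus_IZR, Hf; lra|].
  destruct (Z.even _); [rewrite Hf; lra| rewrite plus_IZR, Hf; lra].
Qed.

Lemma round0 : round_near 0 = 0%Z.
Proof.
  destruct (round_spec 0) as [H1 H2].
  assert (IZR (-1) < IZR (round_near 0)) by lra.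
  assert (IZR (round_near 0) < IZR 1) by lra.
  apply lt_IZR in H. apply lt_IZR in H0. lia.
Qed.

Definition Gn b x k := powerRZ b (- k) / (1 + b) * (b + (x - IZR k + 1/2) * (1 - b)).
Definition Gp b x k := 1 - powerRZ b k / (1 + b) * (b + (IZR k - x + 1/2) * (1 - b)).

Lemma powS b k : 0 < b -> powerRZ b (k + 1) = powerRZ b k * b.
Proof. intros Hb. rewrite powerRZ_add by lra. simpl. ring. Qed.

Lemma Gn_shift1 b x k : 0 < b -> x = IZR k + 1/2 -> Gn b x k = Gn b x (k+1).
Proof.
  intros Hb Hx. unfold Gn. replace (- k)%Z with (- (k+1) + 1)%Z by lia.
  rewrite powS by lra. rewrite plus_IZR. subst x. field. lra.
Qed.

Lemma Gp_shift1 b x k : 0 < b -> x = IZR k + 1/2 -> Gp b x k = Gp b x (k+1).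
Proof.
  intros Hb Hx. unfold Gp. rewrite powS by lra. rewrite plus_IZR. subst x. field. lra.
Qed.

Lemma near_cases x k k' : IZR k - 1/2 <= x <= IZR k + 1/2 ->
  IZR k' - 1/2 <= x <= IZR k' + 1/2 ->
  k' = k \/ (k' = (k + 1)%Z /\ x = IZR k + 1/2) \/ (k = (k' + 1)%Z /\ x = IZR k' + 1/2).
Proof.
  intros H1 H2.
  assert (IZR (k' - k) <= IZR 1) by (rewrite minus_IZR; lra).
  assert (IZR (-1) <= IZR (k' - k)) by (rewrite minus_IZR; lra).
  apply le_IZR in H. apply le_IZR in H0.
  assert (k' = k \/ k' = k + 1 \/ k = k' + 1)%Z as [E|[E|E]] by lia.
  - auto.
  - right; left; split; auto. subst. rewrite plus_IZR in *. lra.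
  - right; right; split; auto. subst. rewrite plus_IZR in *. lra.
Qed.

Lemma Gn_indep b x k k' : 0 < b -> IZR k - 1/2 <= x <= IZR k + 1/2 ->
  IZR k' - 1/2 <= x <= IZR k' + 1/2 -> Gn b x k = Gn b x k'.
Proof.
  intros Hb H1 H2. destruct (near_cases x k k' H1 H2) as [E|[[E Hx]|[E Hx]]]; subst.
  - auto.
  - apply Gn_shift1; auto.
  - symmetry; apply Gn_shift1; auto.
Qed.

Lemma Gp_indep b x k k' : 0 < b -> IZR k - 1/2 <= x <= IZR k + 1/2 ->
  IZR k' - 1/2 <= x <= IZR k' + 1/2 -> Gp b x k = Gp b x k'.
Proof.
  intros Hb H1 H2. destruct (near_cases x k k' H1 H2) as [E|[[E Hx]|[E Hx]]]; subst.
  - auto.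
  - apply Gp_shift1; auto.
  - symmetry; apply Gp_shift1; auto.
Qed.

Lemma tulap_neg b x k : 0 < b -> x <= 0 -> IZR k - 1/2 <= x <= IZR k + 1/2 ->
  tulap_cdf 0 b x = Gn b x k.
Proof.
  intros Hb Hx Hk. unfold tulap_cdf. rewrite round0, Rminus_0_r.
  destruct (Rle_dec _ _) as [_|C]; [|exfalso; apply C; simpl; lra].
  apply (Gn_indep b x (round_near x) k Hb (round_spec x) Hk).
Qed.

Lemma tulap_pos b x k : 0 < b -> 0 < x -> IZR k - 1/2 <= x <= IZR k + 1/2 ->
  tulap_cdf 0 b x = Gp b x k.
Proof.
  intros Hb Hx Hk. unfold tulap_cdf. rewrite round0, Rminus_0_r.
  destruct (Rle_dec _ _) as [C|_]; [exfalso; simpl in C; lra|].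
  apply (Gp_indep b x (round_near x) k Hb (round_spec x) Hk).
Qed.

Lemma pow_le1 b n : 0 < b <= 1 -> b ^ n <= 1.
Proof. intros Hb. induction n; simpl; [lra|]. assert (0 <= b^n) by (apply pow_le; lra). nra. Qed.

Lemma powerRZ_le1 b z : 0 < b <= 1 -> (0 <= z)%Z -> powerRZ b z <= 1.
Proof.
  intros Hb Hz. destruct z as [|p|p]; simpl.
  - lra.
  - apply pow_le1; auto.
  - lia.
Qed.

Lemma tulap_step b x : 0 < b < 1 ->
  tulap_cdf 0 b (x + 1) = Rmin (tulap_cdf 0 b x / b) (1 - b * (1 - tulap_cdf 0 b x)).
Proof.
  intros Hb. set (k := round_near x). pose proof (round_spec x) as Hk. fold k in Hk.
  assert (Hk1 : IZR (k+1) - 1/2 <= x + 1 <= IZR (k+1) + 1/2) by (rewrite plus_IZR; lra).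
  destruct (Rle_dec (x+1) 0) as [Ha|Ha].
  { rewrite (tulap_neg b x k), (tulap_neg b (x+1) (k+1)); try lra.
    assert (Hkn : (k <= -1)%Z).
    { assert (IZR k < IZR 0) by lra. apply lt_IZR in H. lia. }
    assert (HG : Gn b (x+1) (k+1) = Gn b x k / b).
    { unfold Gn. replace (- k)%Z with (- (k+1) + 1)%Z by lia.
      rewrite powS by lra. rewrite plus_IZR. field. lra. }
    rewrite HG. symmetry; apply Rmin_left.
    unfold Gn. replace (- k)%Z with ((- k - 1) + 1)%Z by lia. rewrite powS by lra.
    set (Q := powerRZ b (-k-1)).
    assert (0 < Q) by (apply powerRZ_lt; lra).
    assert (Q <= 1) by (apply powerRZ_le1; lia || lra).
    set (s := x - IZR k + 1/2). assert (0 <= s <= 1) by (unfold s; lra).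
    assert (Hg: Q * b / (1 + b) * (b + s * (1 - b)) * (1 + b) <= b).
    { replace (Q * b / (1 + b) * (b + s * (1 - b)) * (1 + b)) with (b * (Q * (b + s*(1-b)))) by (field; lra).
      assert (Q * (b + s*(1-b)) <= 1). { assert (b + s*(1-b) <= 1) by nra. assert (0 <= b + s*(1-b)) by nra. nra. }
      nra. }
    set (g := Q * b / (1 + b) * (b + s * (1 - b))) in *.
    apply (Rmult_le_reg_r b); [lra|].
    replace (g / b * b) with g by (field; lra).
    nra. }
  destruct (Rlt_dec 0 x) as [Hp|Hp].
  { rewrite (tulap_pos b x k), (tulap_pos b (x+1) (k+1)); try lra.
    assert (Hkn : (0 <= k)%Z).
    { assert (IZR (-1) < IZR k) by lra. apply lt_IZR in H. lia. }
    assert (HG : Gp b (x+1) (k+1) = 1 - b * (1 - Gp b x k)).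
    { unfold Gp. rewrite powS by lra. rewrite plus_IZR. field. lra. }
    rewrite HG. symmetry; apply Rmin_right.
    unfold Gp.
    set (Q := powerRZ b k).
    assert (0 < Q) by (apply powerRZ_lt; lra).
    assert (Q <= 1) by (apply powerRZ_le1; lia || lra).
    set (s := IZR k - x + 1/2). assert (0 <= s <= 1) by (unfold s; lra).
    assert (Hg: Q / (1 + b) * (b + s * (1 - b)) * (1 + b) <= 1).
    { replace (Q / (1 + b) * (b + s * (1 - b)) * (1 + b)) with (Q * (b + s*(1-b))) by (field; lra).
      assert (b + s*(1-b) <= 1) by nra. assert (0 <= b + s*(1-b)) by nra. nra. }
    set (g := Q / (1 + b) * (b + s * (1 - b))) in *.
    apply (Rmult_le_reg_r b); [lra|].
    replace ((1 - g) / b * b) with (1 - g) by (field; lra).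
    nra. }
  destruct (Rle_dec (-1/2) x) as [Hc|Hc].
  { rewrite (tulap_neg b x 0), (tulap_pos b (x+1) 1); try (simpl; lra).
    unfold Gn, Gp. simpl.
    rewrite Rmin_right.
    - field. lra.
    - apply (Rmult_le_reg_r (b * (1+b))); [nra|].
      set (u := x - 0 + 1/2).
      assert (0 <= u*(1-b)) by (apply Rmult_le_pos; unfold u; lra).
      assert (0 <= u*(1-b)*(1-b*b)) by (apply Rmult_le_pos; nra).
      match goal with |- ?L <= ?R =>
        replace L with (b * (1 + b*u*(1-b))) by (field; lra);
        replace R with (b + u*(1-b)) by (field; lra) end.
      nra. }
  { rewrite (tulap_neg b x (-1)), (tulap_pos b (x+1) 0); try (simpl; lra).
    unfold Gn, Gp. simpl.
    rewrite Rmin_left.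
    - field. lra.
    - apply (Rmult_le_reg_r (b * (1+b))); [nra|].
      set (v := x - -1 + 1/2).
      assert (0 <= v <= 1) by (unfold v; lra).
      match goal with |- ?L <= ?R =>
        replace L with (b * (b + v*(1-b))) by (field; lra);
        replace R with (b * ((1 - b) * (1 + b) + b * b * (b + v * (1 - b)))) by (field; lra) end.
      assert (b + v*(1-b) <= 1) by nra.
      assert (0 <= (1 - (b + v*(1-b))) * (1 - b*b)) by (apply Rmult_le_pos; nra).
      nra. }
Qed.

Lemma tulap_bounds b x : 0 < b < 1 -> 0 <= tulap_cdf 0 b x <= 1.
Proof.
  intros Hb. set (k := round_near x). pose proof (round_spec x) as Hk. fold k in Hk.
  destruct (Rle_dec x 0) as [Ha|Ha].
  - rewrite (tulap_neg b x k) by lra.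
    assert (Hkn : (k <= 0)%Z).
    { assert (IZR k < IZR 1) by lra. apply lt_IZR in H. lia. }
    unfold Gn. set (Q := powerRZ b (-k)).
    assert (0 < Q) by (apply powerRZ_lt; lra).
    assert (Q <= 1) by (apply powerRZ_le1; lia || lra).
    set (s := x - IZR k + 1/2). assert (0 <= s <= 1) by (unfold s; lra).
    assert (b + s*(1-b) <= 1) by nra. assert (0 <= b + s*(1-b)) by nra.
    assert (0 <= Q*(b+s*(1-b))) by (apply Rmult_le_pos; lra).
    replace (Q / (1 + b) * (b + s * (1 - b))) with ((Q * (b + s*(1-b))) / (1+b)) by (field; lra).
    split.
    + unfold Rdiv; apply Rmult_le_pos; [nra| apply Rlt_le, Rinv_0_lt_compat; lra].
    + apply Rle_trans with (Q * (b + s*(1-b))); [|nra].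
      apply Rmult_le_reg_r with (1+b); [lra|]. 
      replace (Q * (b + s * (1 - b)) / (1 + b) * (1 + b)) with (Q * (b + s * (1 - b))) by (field; lra).
      nra.
  - rewrite (tulap_pos b x k) by lra.
    assert (Hkn : (0 <= k)%Z).
    { assert (IZR (-1) < IZR k) by lra. apply lt_IZR in H. lia. }
    unfold Gp. set (Q := powerRZ b k).
    assert (0 < Q) by (apply powerRZ_lt; lra).
    assert (Q <= 1) by (apply powerRZ_le1; lia || lra).
    set (s := IZR k - x + 1/2). assert (0 <= s <= 1) by (unfold s; lra).
    assert (b + s*(1-b) <= 1) by nra. assert (0 <= b + s*(1-b)) by nra.
    assert (0 <= Q*(b+s*(1-b))) by (apply Rmult_le_pos; lra).
    replace (Q / (1 + b) * (b + s * (1 - b))) with ((Q * (b + s*(1-b))) / (1+b)) by (field; lra).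
    assert (0 <= (Q * (b + s*(1-b))) / (1+b)) by (unfold Rdiv; apply Rmult_le_pos; [nra| apply Rlt_le, Rinv_0_lt_compat; lra]).
    assert ((Q * (b + s*(1-b))) / (1+b) <= 1).
    { apply Rle_trans with (Q * (b + s*(1-b))); [|nra].
      apply Rmult_le_reg_r with (1+b); [lra|].
      replace (Q * (b + s * (1 - b)) / (1 + b) * (1 + b)) with (Q * (b + s * (1 - b))) by (field; lra).
      nra. }
    lra.
Qed.

Lemma sum_le_loc (f g : nat -> R) N : (forall i, (i <= N)%nat -> f i <= g i) ->
  sum_f_R0 f N <= sum_f_R0 g N.
Proof.
  induction N; intros H; simpl.
  - apply H; lia.
  - apply Rplus_le_compat; [apply IHN; intros; apply H; lia| apply H; lia].
Qed.

Lemma sum_scal c (f : nat -> R) N : sum_f_R0 (fun i => c * f i) N = c * sum_f_R0 f N.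
Proof. induction N; simpl; [ring| rewrite IHN; ring]. Qed.

Lemma sum_sub (f g : nat -> R) N : sum_f_R0 (fun i => f i - g i) N = sum_f_R0 f N - sum_f_R0 g N.
Proof. induction N; simpl; [ring| rewrite IHN; ring]. Qed.

Lemma sum_ext_loc (f g : nat -> R) N : (forall i, (i <= N)%nat -> f i = g i) ->
  sum_f_R0 f N = sum_f_R0 g N.
Proof.
  induction N; intros H; simpl.
  - apply H; lia.
  - rewrite IHN by (intros; apply H; lia). rewrite H by lia. reflexivity.
Qed.

Lemma threshold (N : nat) (d L : nat -> R) :
  (forall x, (x <= N)%nat -> 0 <= L x) ->
  (forall x, (x < N)%nat -> L x <= L (S x)) ->
  (forall x, (x < N)%nat -> 0 < d x -> 0 < d (S x)) ->
  forall j, (j <= N)%nat -> exists c, 0 <= c /\ forall x, (x <= j)%nat ->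
     (d x <= 0 -> L x <= c) /\ (0 < d x -> c <= L x).
Proof.
  intros HL Hmon Hd.
  assert (Hmon' : forall x y, (x <= y)%nat -> (y <= N)%nat -> L x <= L y).
  { intros x y Hxy. induction Hxy; intros; [lra|].
    apply Rle_trans with (L m); [apply IHHxy; lia| apply Hmon; lia]. }
  assert (Hd' : forall x y, (x <= y)%nat -> (y <= N)%nat -> 0 < d x -> 0 < d y).
  { intros x y Hxy. induction Hxy; intros; [auto|]. apply Hd; [lia|]. apply IHHxy; auto; lia. }
  induction j; intros Hj.
  - exists (L 0%nat). split; [apply HL; lia|]. intros x Hx. assert (x = 0%nat) by lia. subst. lra.
  - destruct IHj as [c [Hc Hx]]; [lia|].
    destruct (Rle_dec (d (S j)) 0) as [Hn|Hn].
    + exists (L (S j)). split; [apply HL; lia|]. intros x Hxj. split.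
      * intros _. apply Hmon'; lia.
      * intros Hpos. exfalso. assert (0 < d (S j)) by (apply (Hd' x); auto). lra.
    + exists (Rmin c (L (S j))). split; [apply Rmin_glb; [lra| apply HL; lia]|].
      intros x Hxj. destruct (Nat.eq_dec x (S j)) as [->|Hne].
      * split; [lra| intros; apply Rmin_r].
      * destruct (Hx x) as [H1 H2]; [lia|]. split.
        -- intros Hdx. apply Rmin_glb; [auto| apply Hmon'; lia].
        -- intros Hdx. apply Rle_trans with c; [apply Rmin_l| auto].
Qed.

Lemma mlr_sum (N : nat) (d L w0 : nat -> R) :
  (forall x, (x <= N)%nat -> 0 <= w0 x) ->
  (forall x, (x <= N)%nat -> 0 <= L x) ->
  (forall x, (x < N)%nat -> L x <= L (S x)) ->
  (forall x, (x < N)%nat -> 0 < d x -> 0 < d (S x)) ->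
  0 <= sum_f_R0 (fun x => w0 x * d x) N ->
  0 <= sum_f_R0 (fun x => L x * w0 x * d x) N.
Proof.
  intros Hw HL Hmon Hd Hs.
  destruct (threshold N d L HL Hmon Hd N (le_n N)) as [c [Hc Hx]].
  assert (H : c * sum_f_R0 (fun x => w0 x * d x) N <= sum_f_R0 (fun x => L x * w0 x * d x) N).
  { rewrite <- sum_scal. apply sum_le_loc. intros i Hi.
    destruct (Hx i Hi) as [H1 H2]. assert (0 <= w0 i) by auto.
    destruct (Rle_dec (d i) 0).
    - assert (0 <= (c - L i) * (- d i) * w0 i) by (repeat apply Rmult_le_pos; lra || (specialize (H1 r); lra)). nra.
    - assert (0 <= (L i - c) * d i * w0 i) by (repeat apply Rmult_le_pos; lra || (specialize (H2 (Rnot_le_lt _ _ n)); lra)). nra. }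
  assert (0 <= c * sum_f_R0 (fun x => w0 x * d x) N) by (apply Rmult_le_pos; auto).
  lra.
Qed.

Definition wt (n : nat) (th : R) (x : nat) := C n x * th ^ x * (1 - th) ^ (n - x).

Lemma wt_pos n th x : 0 < th < 1 -> (x <= n)%nat -> 0 < wt n th x.
Proof.
  intros Hth Hx. unfold wt, C.
  pose proof (INR_fact_lt_0 n). pose proof (INR_fact_lt_0 x). pose proof (INR_fact_lt_0 (n - x)).
  repeat apply Rmult_lt_0_compat.
  - auto.
  - apply Rinv_0_lt_compat. apply Rmult_lt_0_compat; auto.
  - apply pow_lt; lra.
  - apply pow_lt; lra.
Qed.

Lemma wt_cross n t0 t1 x : 0 < t0 -> t0 < t1 -> t1 < 1 -> (x < n)%nat ->
  wt n t1 x * wt n t0 (S x) <= wt n t1 (S x) * wt n t0 x.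
Proof.
  intros H0 H01 H1 Hx. unfold wt.
  replace (n - x)%nat with (S (n - S x)) by lia.
  set (a := (n - S x)%nat). simpl pow.
  set (K := C n x * C n (S x) * t1 ^ x * t0 ^ x * (1 - t1) ^ a * (1 - t0) ^ a).
  assert (0 <= K).
  { unfold K, C. pose proof (INR_fact_lt_0 n). pose proof (INR_fact_lt_0 x).
    pose proof (INR_fact_lt_0 (n - x)). pose proof (INR_fact_lt_0 (S x)). pose proof (INR_fact_lt_0 (n - S x)).
    repeat apply Rmult_le_pos; try (apply pow_le; lra); try lra;
    apply Rlt_le, Rinv_0_lt_compat, Rmult_lt_0_compat; auto. }
  match goal with |- ?L <= ?R =>
    replace L with (K * ((1 - t1) * t0)) by (unfold K; ring);
    replace R with (K * (t1 * (1 - t0))) by (unfold K; ring) end.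
  apply Rmult_le_compat_l; auto. nra.
Qed.

Lemma phi_step eps m x : 0 < eps ->
  phi_star eps m (S x) = Rmin (exp eps * phi_star eps m x) (1 - / exp eps * (1 - phi_star eps m x)).
Proof.
  intros He. unfold phi_star.
  assert (HE : 1 < exp eps) by (rewrite <- exp_0; apply exp_increasing; lra).
  assert (Hb : exp (- eps) = / exp eps) by apply exp_Ropp.
  replace (INR (S x) - m) with ((INR x - m) + 1) by (rewrite S_INR; ring).
  rewrite tulap_step.
  - rewrite Hb. f_equal. field. lra.
  - rewrite Hb. split; [apply Rinv_0_lt_compat; lra|].
    rewrite <- Rinv_1. apply Rinv_lt_contravar; lra.
Qed.

Lemma phi_bounds eps m x : 0 < eps -> 0 <= phi_star eps m x <= 1.
Proof.
  intros He. unfold phi_star. apply tulap_bounds.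
  assert (HE : 1 < exp eps) by (rewrite <- exp_0; apply exp_increasing; lra).
  rewrite exp_Ropp. split; [apply Rinv_0_lt_compat; lra|].
  rewrite <- Rinv_1. apply Rinv_lt_contravar; lra.
Qed.

Theorem theorem3 (eps alpha theta0 theta1 : R) (n : nat) (m : R) :
  0 < eps -> 0 < alpha < 1 -> 0 < theta0 -> theta0 < theta1 -> theta1 < 1 ->
  (1 <= n)%nat ->
  binom_expect n theta0 (phi_star eps m) = alpha ->
  UMP_simple n (DP_tests n eps 0) alpha theta0 theta1 (phi_star eps m).
Proof.
  intros He Ha H0 H01 H1 Hn Hexp.
  assert (HE : 1 < exp eps) by (rewrite <- exp_0; apply exp_increasing; lra).
  assert (HiE : 0 < / exp eps < 1).
  { split; [apply Rinv_0_lt_compat; lra|]. rewrite <- Rinv_1. apply Rinv_lt_contravar; lra. }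
  assert (HEi : exp eps * / exp eps = 1) by (field; lra).
  set (ps := phi_star eps m).
  split; [|split].
  - split.
    + intros x _. apply phi_bounds; auto.
    + intros x _. unfold ps. rewrite phi_step by auto.
      pose proof (phi_bounds eps m x He). set (p := phi_star eps m x) in *.
      set (E := exp eps) in *. set (e := / E) in *.
      unfold Rmin; destruct (Rle_dec _ _); repeat split; try nra; assert (0 <= (E*E - 1) * p) by (apply Rmult_le_pos; nra); nra.
  - unfold ps; lra.
  - intros phi [Htest Hdp] Hlev.
    set (d := fun x => ps x - phi x).
    assert (Hsign : forall x, (x < n)%nat -> 0 < d x -> 0 < d (S x)).
    { intros x Hx Hd. unfold d in *. unfold ps. rewrite phi_step by auto. fold ps.
      destruct (Hdp x Hx) as [_ [A [B _]]].
      set (E := exp eps) in *. set (e := / E) in *.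
      assert (phi (S x) < Rmin (E * ps x) (1 - e * (1 - ps x))); [|lra].
      apply Rmin_glb_lt.
      - nra.
      - assert (e * (1 - phi x) <= 1 - phi (S x)).
        { apply (Rmult_le_reg_l E); [lra|].
          replace (E * (e * (1 - phi x))) with (1 - phi x) by (unfold e; field; lra). lra. }
        nra. }
    set (L := fun x => wt n theta1 x / wt n theta0 x).
    assert (Hw0 : forall x, (x <= n)%nat -> 0 < wt n theta0 x) by (intros; apply wt_pos; auto; lra).
    assert (Hw1 : forall x, (x <= n)%nat -> 0 < wt n theta1 x) by (intros; apply wt_pos; auto; lra).
    assert (HL : forall x, (x <= n)%nat -> 0 <= L x).
    { intros x Hx. unfold L, Rdiv. apply Rmult_le_pos; [apply Rlt_le; auto|].
      apply Rlt_le, Rinv_0_lt_compat; auto. }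
    assert (Hmon : forall x, (x < n)%nat -> L x <= L (S x)).
    { intros x Hx. unfold L.
      pose proof (Hw0 x ltac:(lia)). pose proof (Hw0 (S x) ltac:(lia)).
      pose proof (wt_cross n theta0 theta1 x H0 H01 H1 Hx).
      apply (Rmult_le_reg_r (wt n theta0 x * wt n theta0 (S x))); [nra|].
      match goal with |- ?L <= ?R =>
        replace L with (wt n theta1 x * wt n theta0 (S x)) by (field; lra);
        replace R with (wt n theta1 (S x) * wt n theta0 x) by (field; lra) end.
      auto. }
    assert (Hs0 : 0 <= sum_f_R0 (fun x => wt n theta0 x * d x) n).
    { unfold d. rewrite (sum_ext_loc _ (fun x => wt n theta0 x * ps x - wt n theta0 x * phi x))
        by (intros; ring).
      rewrite sum_sub. unfold binom_expect in Hexp, Hlev. unfold wt. fold ps in Hexp. lra. }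
    pose proof (mlr_sum n d L (wt n theta0) ltac:(intros; apply Rlt_le; auto) HL Hmon Hsign Hs0) as Hs1.
    rewrite (sum_ext_loc _ (fun x => wt n theta1 x * ps x - wt n theta1 x * phi x)) in Hs1.
    + rewrite sum_sub in Hs1. unfold binom_expect. unfold wt in Hs1. fold ps. lra.
    + intros i Hi. unfold L, d. pose proof (Hw0 i Hi). field. lra.
Qed.
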